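(* Let $1<a<b$ be coprime integers and $D,E\subseteq G$ subdiagrams. Let $N(D,U_E)=\{(i,j)\in D\times U_E: i\to j\}$, let $N_b(D,U_E)$ be the set of $(i,j)\in N(D,U_E)$ with $j$ strictly north of $i$, and $N_r(D,U_E)=N(D,U_E)\setminus N_b(D,U_E)$ (pairs with $j$ strictly south of $i$ or $j=i$). Then \[ |N_b(D,U_E)|=\#\{c\in D\cap E:\ M_D^E(c)\le a/b\},\qquad |N_r(D,U_E)|=|D\setminus E|+\#\{c\in D\cap E:\ m_E^D(c)\ge a/b\}. \]
   Context: Fix coprime integers $1<a<b$. Work in the grid $\mathbb{Z}^2$ ($+x$ east, $+y$ north). Let $g:\mathbb{Z}^2\to\mathbb{Z}$, $g(x,y)=ab-ax-by$; for a cell $c=(x,y)$ and integer $k$, $c-ka:=(x+k,y)$ and $c-kb:=(x,y+k)$. Let $G=\{(x,y)\in\mathbb{Z}_{\ge1}^2: g(x,y)>0\}$. A subdiagram is a subset $D\subseteq G$ such that whenever $(x,y)\in D$, $(x',y')\in G$, $x'\le x$, $y'\le y$, we have $(x',y')\in D$. For cells $i,j$, write $i\to j$ iff $0\le g(j)-g(i)<a$. For a subdiagram $E$, $U_E=\{(x,y)\in\mathbb{Z}^2: (x,y)\notin E,\ (x,y-1)\in E\cup(\mathbb{Z}_{\ge1}\times\mathbb{Z}_{\le0})\}$. For a subdiagram $D$ and $c\in D$, $\mathrm{arm}_D(c)=\max\{k\ge0: c-ka\in D\}$, $\mathrm{leg}_D(c)=\max\{k\ge0: c-kb\in D\}$.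 For subdiagrams $D,E$ and $c\in D\cap E$, $m_D^E(c)=\frac{\mathrm{leg}_E(c)}{\mathrm{arm}_D(c)+1}$ and $M_D^E(c)=\frac{\mathrm{leg}_E(c)+1}{\mathrm{arm}_D(c)}$ (with $M_D^E(c)=+\infty$ if $\mathrm{arm}_D(c)=0$). *)

(* Defs.v *)
From Stdlib Require Import ZArith QArith List.
Open Scope Z_scope.

Definition cell := (Z * Z)%type.

Definition g (a b : Z) (c : cell) : Z := a * b - a * fst c - b * snd c.

(* c - k a := (x+k, y) ;  c - k b := (x, y+k) *)
Definition shiftA (c : cell) (k : Z) : cell := (fst c + k, snd c).
Definition shiftB (c : cell) (k : Z) : cell := (fst c, snd c + k).

Definition inG (a b : Z) (c : cell) : Prop := 1 <= fst c /\ 1 <= snd c /\ 0 < g a b c.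

Definition subdiagram (a b : Z) (D : cell -> Prop) : Prop :=
  (forall c, D c -> inG a b c) /\
  (forall x y x' y', D (x, y) -> inG a b (x', y') -> x' <= x -> y' <= y -> D (x', y')).

Definition arrow (a b : Z) (i j : cell) : Prop := 0 <= g a b j - g a b i < a.

Definition UE (E : cell -> Prop) (c : cell) : Prop :=
  ~ E c /\ (E (fst c, snd c - 1) \/ (1 <= fst c /\ snd c - 1 = 0)).

Definition is_max (P : Z -> Prop) (k : Z) : Prop := P k /\ forall k', P k' -> k' <= k.

Definition is_arm (D : cell -> Prop) (c : cell) (k : Z) : Prop :=
  is_max (fun k => 0 <= k /\ D (shiftA c k)) k.
Definition is_leg (D : cell -> Prop) (c : cell) (k : Z) : Prop :=
  is_max (fun k => 0 <= k /\ D (shiftB c k)) k.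

(* m = leg / (arm + 1) ;  M = (leg + 1) / arm, with None standing for +infinity *)
Definition mval (armv legv : Z) : Q := (inject_Z legv / inject_Z (armv + 1))%Q.
Definition Mval (armv legv : Z) : option Q :=
  if armv =? 0 then None else Some (inject_Z (legv + 1) / inject_Z armv)%Q.

Definition M_le (D E : cell -> Prop) (c : cell) (q : Q) : Prop :=
  exists ar lg, is_arm D c ar /\ is_leg E c lg /\
    match Mval ar lg with None => False | Some v => (v <= q)%Q end.

Definition m_ge (D E : cell -> Prop) (c : cell) (q : Q) : Prop :=
  exists ar lg, is_arm D c ar /\ is_leg E c lg /\ (q <= mval ar lg)%Q.

Definition has_card {T : Type} (P : T -> Prop) (n : nat) : Prop :=
  exists l : list T, NoDup l /\ (forall x, In x l <-> P x) /\ length l = n.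

Definition Nset (a b : Z) (D E : cell -> Prop) (p : cell * cell) : Prop :=
  D (fst p) /\ UE E (snd p) /\ arrow a b (fst p) (snd p).
Definition Nb (a b : Z) (D E : cell -> Prop) (p : cell * cell) : Prop :=
  Nset a b D E p /\ snd (fst p) < snd (snd p).
Definition Nr (a b : Z) (D E : cell -> Prop) (p : cell * cell) : Prop :=
  Nset a b D E p /\ ~ Nb a b D E p.

(* Main.v *)
Require Import Defs.
From Stdlib Require Import ZArith QArith List Lia Classical ClassicalEpsilon.
Open Scope Z_scope.

Lemma max_exists (Q : Z -> Prop) k0 N : Q k0 -> (forall k, Q k -> k <= N) -> exists k, is_max Q k.
Proof.
  intros H0 HN.
  assert (forall n : nat, forall k0, (Z.to_nat (N - k0) <= n)%nat -> Q k0 -> exists k, is_max Q k).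
  { induction n as [|n IH]; intros k1 Hk Q1.
    - exists k1. split; [exact Q1|]. intros k' Hk'. pose proof (HN k' Hk'). pose proof (HN k1 Q1). lia.
    - destruct (classic (exists k, Q k /\ k1 < k)) as [[k [Qk Hlt]]|Hno].
      + apply (IH k); [|exact Qk]. pose proof (HN k Qk). lia.
      + exists k1. split; [exact Q1|]. intros k' Hk'. destruct (Z_lt_le_dec k1 k'); [|lia].
        exfalso; apply Hno; eauto. }
  eapply H; [apply le_n | exact H0].
Qed.

Lemma inG_bound a b c : 0 < a -> 0 < b -> inG a b c -> fst c < b /\ snd c < a.
Proof. destruct c as [x y]; unfold inG, g; simpl; intros; nia. Qed.

Lemma inG_mono a b x y x' y' : 0<a -> 0<b -> inG a b (x,y) -> 1 <= x' <= x -> 1 <= y' <= y -> inG a b (x',y').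
Proof. unfold inG, g; simpl; intros; nia. Qed.

Lemma exists_col a b S : 0 < a -> 0 < b -> subdiagram a b S ->
  exists h : Z -> Z, (forall x, 0 <= h x) /\ (forall x y, S (x,y) <-> 1 <= y <= h x).
Proof.
  intros Ha Hb [HG Hdc].
  assert (Hx : forall x, exists H, 0 <= H /\ forall y, S (x,y) <-> 1 <= y <= H).
  { intro x.
    destruct (max_exists (fun y => y = 0 \/ S (x,y)) 0 a) as [H [HQ HM]].
    - left; reflexivity.
    - intros k [->|Hk]; [lia|]. pose proof (inG_bound a b _ Ha Hb (HG _ Hk)); simpl in *; lia.
    - exists H. assert (0 <= H) by (apply HM; left; reflexivity). split; [lia|].
      intro y; split.
      + intro Hy. pose proof (HG _ Hy) as [? [? ?]]; simpl in *. split; [lia|]. apply HM; right; exact Hy.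
      + intros Hy. destruct HQ as [->|HS]; [lia|].
        pose proof (HG _ HS) as HGS.
        apply (Hdc x H x y HS); [|lia|lia].
        destruct HGS as [? [? ?]]; simpl in *. apply (inG_mono a b x H); auto; try lia. }
  exists (fun x => proj1_sig (constructive_indefinite_description _ (Hx x))).
  split; [intro x | intros x y]; destruct (constructive_indefinite_description _ (Hx x)) as [H [H0 HS]]; simpl;
    [exact H0 | apply HS].
Qed.

Definition zrange (lo hi : Z) : list Z := map (fun n => lo + Z.of_nat n) (seq 0 (Z.to_nat (hi - lo))).

Lemma in_zrange lo hi z : In z (zrange lo hi) <-> lo <= z < hi.
Proof. unfold zrange; rewrite in_map_iff; split.
 - intros [n [<- Hn]]. apply in_seq in Hn. lia.
 - intros H. exists (Z.to_nat (z - lo)). split; [lia|]. apply in_seq. lia. Qed.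

Lemma NoDup_map_on {A B} (f : A -> B) (l : list A) :
  (forall x y, In x l -> In y l -> f x = f y -> x = y) -> NoDup l -> NoDup (map f l).
Proof.
  induction l as [|a l IH]; intros Hinj Hnd; simpl.
  - constructor.
  - inversion Hnd; subst. constructor.
    + intro Hin. apply in_map_iff in Hin as [y [Hy Hin]].
      assert (y = a) by (apply Hinj; simpl; auto). subst; contradiction.
    + apply IH; auto. intros; apply Hinj; simpl; auto.
Qed.

Lemma nodup_zrange lo hi : NoDup (zrange lo hi).
Proof. unfold zrange. apply NoDup_map_on; [intros; lia|]. apply seq_NoDup. Qed.

Lemma nodup_prod {A B} (l : list A) (l' : list B) : NoDup l -> NoDup l' -> NoDup (list_prod l l').
Proof.
  induction l as [|a l IH]; intros H1 H2; simpl; [constructor|].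
  inversion H1; subst. apply NoDup_app.
  - apply NoDup_map_on; auto. intros x y _ _ E; inversion E; auto.
  - apply IH; auto.
  - intros [u v] Hin Hin'. apply in_map_iff in Hin as [w [E _]]. inversion E; subst.
    apply in_prod_iff in Hin' as [? _]. contradiction.
Qed.

Lemma finite_cells (P : cell -> Prop) lo1 hi1 lo2 hi2 :
  (forall c, P c -> lo1 <= fst c < hi1 /\ lo2 <= snd c < hi2) -> exists n, has_card P n.
Proof.
  intros HP.
  set (box := list_prod (zrange lo1 hi1) (zrange lo2 hi2)).
  set (l := filter (fun c => if excluded_middle_informative (P c) then true else false) box).
  exists (length l). exists l. split; [|split; [|reflexivity]].
  - apply NoDup_filter. apply nodup_prod; apply nodup_zrange.
  - intros [x y]. unfold l. rewrite filter_In. unfold box.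
    assert (Hb := in_prod_iff (zrange lo1 hi1) (zrange lo2 hi2) x y). rewrite !in_zrange in Hb.
    destruct (excluded_middle_informative (P (x,y))) as [Hc|Hc].
    + specialize (HP _ Hc); simpl in HP. split; [tauto|]. intros; split; [apply Hb; lia|reflexivity].
    + split; [intros [_ F]; discriminate | tauto].
Qed.

Lemma card_union {T} (A B : T -> Prop) n1 n2 : has_card A n1 -> has_card B n2 ->
  (forall x, A x -> B x -> False) -> has_card (fun x => A x \/ B x) (n1+n2).
Proof.
  intros [l1 [N1 [I1 L1]]] [l2 [N2 [I2 L2]]] Hd.
  exists (l1 ++ l2). split; [|split].
  - apply NoDup_app; auto. intros x H1 H2. apply (Hd x); [apply I1|apply I2]; auto.
  - intro x. rewrite in_app_iff, I1, I2. tauto.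
  - rewrite length_app; lia.
Qed.

Lemma transfer {A B} (P : A -> Prop) (Q : B -> Prop) (f : A -> B) n :
  has_card P n -> (forall x, P x -> Q (f x)) ->
  (forall x y, P x -> P y -> f x = f y -> x = y) ->
  (forall z, Q z -> exists x, P x /\ f x = z) -> has_card Q n.
Proof.
  intros [l [Hnd [Hin Hlen]]] HPQ Hinj Hsurj.
  exists (map f l). split; [|split].
  - apply NoDup_map_on; auto. intros x y Hx Hy. apply Hinj; apply Hin; auto.
  - intro z. rewrite in_map_iff. split.
    + intros [x [<- Hx]]. apply HPQ, Hin, Hx.
    + intros Hz. destruct (Hsurj z Hz) as [x [Hx <-]]. exists x; split; auto. apply Hin; auto.
  - rewrite length_map; auto.
Qed.

Lemma Qfrac_le p q r s : 0 < q -> 0 < s ->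
  ((inject_Z p / inject_Z q <= inject_Z r / inject_Z s)%Q <-> p * s <= r * q).
Proof.
  intros Hq Hs. destruct q as [|qp|qp]; try lia. destruct s as [|sp|sp]; try lia.
  unfold Qle, Qdiv, Qmult, Qinv, inject_Z; simpl. lia.
Qed.

Lemma leg_eq S h c lg : (forall x y, S (x,y) <-> 1 <= y <= h x) -> S c -> is_leg S c lg -> lg = h (fst c) - snd c.
Proof.
  destruct c as [x y]; unfold is_leg, is_max, shiftB; simpl. intros Hs Hc [[H0 H1] H2].
  apply Hs in Hc. apply Hs in H1.
  assert (h x - y <= lg). { apply H2. split; [lia|]. apply Hs. lia. }
  lia.
Qed.

Lemma leg_is S h x y : (forall x y, S (x,y) <-> 1 <= y <= h x) -> S (x,y) -> is_leg S (x,y) (h x - y).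
Proof. unfold is_leg, is_max, shiftB; simpl. intros Hs Hc. apply Hs in Hc. split.
 - split; [lia|]. apply Hs; lia.
 - intros k [Hk Hk']. apply Hs in Hk'. lia. Qed.

Lemma arm_prop a b S x y ar : 0<a -> 0<b -> subdiagram a b S -> S (x,y) -> is_arm S (x,y) ar ->
  forall k, 0 <= k -> (S (x+k, y) <-> k <= ar).
Proof.
  unfold is_arm, is_max, shiftA; simpl. intros Ha Hb [HG Hdc] Hc [[H0 H1] H2] k Hk. split.
  - intro; apply H2; auto.
  - intro Hle. apply (Hdc (x+ar) y (x+k) y H1); [|lia|lia].
    pose proof (HG _ Hc) as [? [? ?]]; simpl in *. apply (inG_mono a b (x+ar) y); auto; try lia.
Qed.

Lemma arm_exists a b S x y : 0<a -> 0<b -> subdiagram a b S -> S (x,y) -> exists ar, is_arm S (x,y) ar.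
Proof.
  intros Ha Hb [HG Hdc] Hc. unfold is_arm.
  apply (max_exists _ 0 b).
  - split; [lia|]. unfold shiftA; simpl. rewrite Z.add_0_r. exact Hc.
  - intros k [Hk Hk']. unfold shiftA in Hk'; simpl in Hk'. pose proof (HG _ Hk') as HGk.
    pose proof (inG_bound a b _ Ha Hb HGk). pose proof (HG _ Hc) as [? _]. simpl in *. lia.
Qed.

Lemma ceil_prop a m : 0 < a -> m <= a*((m + a - 1)/a) < m + a /\ forall d, (m <= a*d <-> (m + a - 1)/a <= d).
Proof.
  intros Ha. pose proof (Z.div_mod (m+a-1) a ltac:(lia)). pose proof (Z.mod_pos_bound (m+a-1) a Ha).
  set (s := (m+a-1)/a) in *. set (r := (m+a-1) mod a) in *. split; [nia|]. intro d; split; intro; nia.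
Qed.

Lemma floor_prop a m : 0 < a -> a*(m/a) <= m < a*(m/a) + a /\ forall d, (a*d <= m <-> d <= m/a).
Proof.
  intros Ha. pose proof (Z.div_mod m a ltac:(lia)). pose proof (Z.mod_pos_bound m a Ha).
  set (s := m/a) in *. set (r := m mod a) in *. split; [nia|]. intro d; split; intro; nia.
Qed.

Lemma floor_unique a m d : 0 < a -> a*d <= m < a*d + a -> d = m/a.
Proof. intros. apply Z.div_unique with (m - a*d); lia. Qed.

Lemma ceil_unique a m d : 0 < a -> m <= a*d < m + a -> d = (m + a - 1)/a.
Proof. intros. apply Z.div_unique with (m + a - 1 - a*d); lia. Qed.

Lemma part1 a b D E hD hE : 1 < a -> a < b -> subdiagram a b D -> subdiagram a b E ->
  (forall x, 0 <= hD x) -> (forall x y, D (x,y) <-> 1 <= y <= hD x) ->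
  (forall x, 0 <= hE x) -> (forall x y, E (x,y) <-> 1 <= y <= hE x) ->
  exists n, has_card (Nb a b D E) n /\
      has_card (fun c => D c /\ E c /\ M_le D E c (inject_Z a / inject_Z b)%Q) n.
Proof.
  intros Ha Hab SD SE hD0 HD hE0 HE.
  set (P1 := fun c => D c /\ E c /\ M_le D E c (inject_Z a / inject_Z b)%Q).
  destruct (finite_cells P1 1 b 1 a) as [n Hn].
  { intros c [Hc _]. destruct SD as [HG _]. pose proof (HG c Hc) as Hg.
    pose proof (inG_bound a b c ltac:(lia) ltac:(lia) Hg). destruct Hg as [? [? ?]]. lia. }
  exists n; split; [|exact Hn].
  set (s := fun L => (b*(L+1) + a - 1)/a).
  set (f := fun c : cell => (((fst c + s (hE (fst c) - snd c), snd c) : cell), ((fst c, hE (fst c) + 1) : cell))).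
  apply (transfer P1 _ f n Hn).
  - intros [x y] [Dc [Ec Mc]].
    destruct Mc as [ar [lg [Har [Hlg Hv]]]].
    pose proof (leg_eq E hE _ lg HE Ec Hlg) as Elg; simpl in Elg.
    assert (ar0 : 0 <= ar) by (destruct Har as [[? _] _]; auto).
    unfold Mval in Hv. destruct (ar =? 0) eqn:Ear; [contradiction|]. apply Z.eqb_neq in Ear.
    apply (Qfrac_le (lg+1) ar a b) in Hv; try lia.
    pose proof (proj1 (HE _ _) Ec) as HEc. simpl in HEc.
    pose proof (ceil_prop a (b*(hE x - y + 1)) ltac:(lia)) as [Hc1 Hc2].
    assert (Hs : s (hE x - y) <= ar). { apply Hc2. subst lg. nia. }
    assert (Hs0 : 0 < s (hE x - y)) by (unfold s; nia).
    unfold f, Nb, Nset, UE, arrow; simpl. split; [split; [|split; [split|]]|].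
    + apply (arm_prop a b D x y ar); auto; lia.
    + rewrite HE; lia.
    + left. apply HE. lia.
    + unfold g; simpl. unfold s. nia.
    + lia.
  - intros [x y] [x' y'] _ _ Heq. unfold f in Heq; simpl in Heq.
    injection Heq as H1 H2 H3 H4. subst. reflexivity.
  - intros [[xi yi] [xj yj]] [[Di [[nEj Hj] Harr]] Hlt]. simpl in *.
    pose proof (proj1 (HD _ _) Di) as HDi.
    destruct Hj as [Hj|Hj]; [|lia].
    apply HE in Hj. rewrite HE in nEj.
    assert (HhE : hE xj = yj - 1) by lia.
    unfold arrow, g in Harr; simpl in Harr.
    assert (Hd : xi - xj = s (hE xj - yi)). { unfold s; apply ceil_unique; [lia|]; rewrite HhE. nia. }
    assert (Ec : E (xj, yi)) by (apply HE; lia).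
    assert (Dc : D (xj, yi)).
    { pose proof (ceil_prop a (b*(hE xj - yi + 1)) ltac:(lia)) as [Hc1 _]. fold (s (hE xj - yi)) in Hc1.
      destruct SD as [HG Hdc]. apply (Hdc xi yi); [exact Di| |nia|lia].
      destruct SE as [HGE _]. apply HGE; auto. }
    exists (xj, yi). split.
    + split; [exact Dc|split; [exact Ec|]].
      destruct (arm_exists a b D xj yi ltac:(lia) ltac:(lia) SD Dc) as [ar Har].
      pose proof (arm_prop a b D xj yi ar ltac:(lia) ltac:(lia) SD Dc Har (xi - xj)) as Hap.
      pose proof (ceil_prop a (b*(hE xj - yi + 1)) ltac:(lia)) as [Hc1 _]. fold (s (hE xj - yi)) in Hc1.
      assert (xi - xj <= ar) by (apply Hap; [nia|]; replace (xj + (xi - xj)) with xi by ring; exact Di).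
      exists ar, (hE xj - yi). split; [exact Har|split; [apply leg_is; auto|]].
      unfold Mval. destruct (ar =? 0) eqn:Ear; [apply Z.eqb_eq in Ear; nia|].
      assert (0 < xi - xj) by (rewrite Hd; nia).
      apply (Qfrac_le (hE xj - yi + 1) ar a b); try lia. rewrite Hd in *. nia.
    + unfold f; simpl. rewrite <- Hd, HhE. f_equal; f_equal; ring.
Qed.

Lemma part2 a b D E hD hE : 1 < a -> a < b -> subdiagram a b D -> subdiagram a b E ->
  (forall x, 0 <= hD x) -> (forall x y, D (x,y) <-> 1 <= y <= hD x) ->
  (forall x, 0 <= hE x) -> (forall x y, E (x,y) <-> 1 <= y <= hE x) ->
  exists n1 n2,
      has_card (Nr a b D E) (n1 + n2)%nat /\
      has_card (fun c => D c /\ ~ E c) n1 /\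
      has_card (fun c => D c /\ E c /\ m_ge E D c (inject_Z a / inject_Z b)%Q) n2.
Proof.
  intros Ha Hab SD SE hD0 HD hE0 HE.
  assert (Hbox : forall c, D c -> 1 <= fst c < b /\ 1 <= snd c < a).
  { intros c Hc. destruct SD as [HG _]. pose proof (HG c Hc) as Hg.
    pose proof (inG_bound a b c ltac:(lia) ltac:(lia) Hg). destruct Hg as [? [? ?]]. lia. }
  set (A1 := fun c => D c /\ ~ E c).
  set (A2 := fun c => D c /\ E c /\ m_ge E D c (inject_Z a / inject_Z b)%Q).
  destruct (finite_cells A1 1 b 1 a) as [n1 H1]; [intros c [Hc _]; auto|].
  destruct (finite_cells A2 1 b 1 a) as [n2 H2]; [intros c [Hc _]; auto|].
  exists n1, n2. split; [|split; auto].
  set (phi := fun L => b*L/a).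
  assert (char2 : forall x y, D (x,y) -> (A1 (x,y) \/ A2 (x,y) <-> ~ E (x + phi (hD x - y), y))).
  { intros x y Dc. pose proof (proj1 (HD _ _) Dc) as HDc.
    pose proof (floor_prop a (b*(hD x - y)) ltac:(lia)) as [Hf1 Hf2]. fold (phi (hD x - y)) in Hf1, Hf2.
    assert (Hp0 : 0 <= phi (hD x - y)) by (apply Hf2; nia).
    destruct (Hbox _ Dc) as [Hbx Hby]; simpl in Hbx, Hby.
    split.
    - intros [[_ nEc]|[_ [Ec [ar [lg [Har [Hlg Hq]]]]]]].
      + intro HE'. apply nEc. destruct SE as [HGE HdcE].
        apply (HdcE (x + phi (hD x - y)) y x y HE'); [|lia|lia].
        destruct SD as [HG _]; auto.
      + pose proof (leg_eq D hD _ lg HD Dc Hlg) as Elg; simpl in Elg.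
        assert (ar0 : 0 <= ar) by (destruct Har as [[? _] _]; auto).
        unfold mval in Hq. apply (Qfrac_le a b lg (ar+1)) in Hq; try lia.
        assert (ar + 1 <= phi (hD x - y)) by (apply Hf2; subst lg; nia).
        intro HE'. apply (arm_prop a b E x y ar ltac:(lia) ltac:(lia) SE Ec Har) in HE'; lia.
    - intro nE. destruct (classic (E (x,y))) as [Ec|nEc]; [right|left; split; auto].
      split; [exact Dc|split; [exact Ec|]].
      destruct (arm_exists a b E x y ltac:(lia) ltac:(lia) SE Ec) as [ar Har].
      assert (ar0 : 0 <= ar) by (destruct Har as [[? _] _]; auto).
      assert (phi (hD x - y) > ar).
      { destruct (Z_le_gt_dec (phi (hD x - y)) ar) as [Hle|]; [|lia].
        exfalso; apply nE. apply (arm_prop a b E x y ar ltac:(lia) ltac:(lia) SE Ec Har); lia. }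
      exists ar, (hD x - y). split; [exact Har|split; [apply leg_is; auto|]].
      unfold mval. apply (Qfrac_le a b (hD x - y) (ar+1)); try lia. nia. }
  set (f := fun c : cell =>
    let L := hD (fst c) - snd c in
    (((fst c, hE (fst c + phi L) + 1 + L) : cell), ((fst c + phi L, hE (fst c + phi L) + 1) : cell))).
  apply (transfer (fun c => A1 c \/ A2 c) _ f (n1+n2)).
  - apply card_union; auto. intros c [_ Hn] [_ [He _]]; auto.
  - intros [x y] HP.
    assert (Dc : D (x,y)) by (destruct HP as [[? _]|[? _]]; auto).
    apply (char2 x y Dc) in HP. rewrite HE in HP.
    pose proof (proj1 (HD _ _) Dc) as HDc.
    pose proof (floor_prop a (b*(hD x - y)) ltac:(lia)) as [Hf1 Hf2]. fold (phi (hD x - y)) in Hf1, Hf2.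
    assert (Hp0 : 0 <= phi (hD x - y)) by (apply Hf2; nia).
    destruct (Hbox _ Dc) as [Hbx Hby]; simpl in Hbx, Hby.
    pose proof (hE0 (x + phi (hD x - y))).
    unfold f, Nr, Nb, Nset, UE, arrow; simpl.
    assert (Hn : D (x, hE (x + phi (hD x - y)) + 1 + (hD x - y)) /\
       (~ E (x + phi (hD x - y), hE (x + phi (hD x - y)) + 1) /\
        (E (x + phi (hD x - y), hE (x + phi (hD x - y)) + 1 - 1) \/
         1 <= x + phi (hD x - y) /\ hE (x + phi (hD x - y)) + 1 - 1 = 0)) /\
       0 <= g a b (x + phi (hD x - y), hE (x + phi (hD x - y)) + 1) -
            g a b (x, hE (x + phi (hD x - y)) + 1 + (hD x - y)) < a).
    { split; [apply HD; lia|split; [split|]].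
      - rewrite HE; lia.
      - destruct (Z.eq_dec (hE (x + phi (hD x - y))) 0) as [E0|E0]; [right; lia|left; apply HE; lia].
      - unfold g; simpl. nia. }
    split; [exact Hn|]. intros [_ Hlt]. simpl in Hlt. lia.
  - intros [x y] [x' y'] HP HP' Heq. unfold f in Heq; simpl in Heq.
    injection Heq as E1 E2 E3 E4. subst x'.
    assert (Hphi : phi (hD x - y) = phi (hD x - y')) by lia.
    assert (Dc : D (x,y)) by (destruct HP as [[? _]|[? _]]; auto).
    assert (Dc' : D (x,y')) by (destruct HP' as [[? _]|[? _]]; auto).
    pose proof (proj1 (HD _ _) Dc). pose proof (proj1 (HD _ _) Dc').
    pose proof (floor_prop a (b*(hD x - y)) ltac:(lia)) as [Hf1 _].
    pose proof (floor_prop a (b*(hD x - y')) ltac:(lia)) as [Hf1' _].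
    fold (phi (hD x - y)) in Hf1. fold (phi (hD x - y')) in Hf1'. rewrite <- Hphi in Hf1'.
    assert (y = y') by nia. subst; reflexivity.
  - intros [[xi yi] [xj yj]] [[Di [[nEj Hj] Harr]] nNb].
    assert (Hle : yj <= yi).
    { destruct (Z_lt_le_dec yi yj) as [Hlt|]; [|lia]. exfalso; apply nNb. split; [|exact Hlt].
      split; [exact Di|split; [split; auto|exact Harr]]. }
    simpl in *.
    pose proof (proj1 (HD _ _) Di) as HDi.
    rewrite HE in nEj. pose proof (hE0 xj).
    assert (HhE : hE xj = yj - 1).
    { destruct Hj as [Hj|Hj]; [apply HE in Hj|]; lia. }
    unfold arrow, g in Harr; simpl in Harr.
    assert (Hd : xj - xi = phi (yi - yj)) by (unfold phi; apply floor_unique; [lia|]; nia).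
    assert (Dc : D (xi, hD xi - (yi - yj))) by (apply HD; lia).
    exists (xi, hD xi - (yi - yj)). split.
    + apply (char2 _ _ Dc). simpl.
      replace (hD xi - (hD xi - (yi - yj))) with (yi - yj) by ring.
      replace (xi + phi (yi - yj)) with xj by lia. rewrite HE. lia.
    + unfold f; simpl.
      replace (hD xi - (hD xi - (yi - yj))) with (yi - yj) by ring.
      replace (xi + phi (yi - yj)) with xj by lia. rewrite HhE.
      f_equal; f_equal; ring.
Qed.

Theorem mainTheorem7 (a b : Z) (D E : cell -> Prop) :
  1 < a -> a < b -> Z.gcd a b = 1 ->
  subdiagram a b D -> subdiagram a b E ->
  (exists n,
      has_card (Nb a b D E) n /\
      has_card (fun c => D c /\ E c /\ M_le D E c (inject_Z a / inject_Z b)%Q) n) /\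
  (exists n1 n2,
      has_card (Nr a b D E) (n1 + n2)%nat /\
      has_card (fun c => D c /\ ~ E c) n1 /\
      has_card (fun c => D c /\ E c /\ m_ge E D c (inject_Z a / inject_Z b)%Q) n2).
Proof.
  intros Ha Hab _ SD SE.
  destruct (exists_col a b D ltac:(lia) ltac:(lia) SD) as [hD [hD0 HD]].
  destruct (exists_col a b E ltac:(lia) ltac:(lia) SE) as [hE [hE0 HE]].
  split; [exact (part1 a b D E hD hE Ha Hab SD SE hD0 HD hE0 HE) | exact (part2 a b D E hD hE Ha Hab SD SE hD0 HD hE0 HE)].
Qed.
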